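(* Let $B\subseteq\widetilde\Sigma^*\setminus\mathring\Sigma^+$ be a base in decomposed form with scaffold $sc$ and fill $fl$. Then $\mathcal{C}(B)=\big(sc\cup(sc\,@\,fl^@)\big)\cap\Sigma^*$.
   Context: $\Sigma$ is a finite alphabet, $\mathring\Sigma=\{\mathring a\mid a\in\Sigma\}$ a disjoint (''dotted'') copy, and $\widetilde\Sigma=\Sigma\cup\mathring\Sigma$. The match operation $@$ on letters is: $a@\mathring a=\mathring a@a=a$, $\mathring a@\mathring a=\mathring a$ for $a\in\Sigma$, undefined otherwise. For words $w,w'\in\widetilde\Sigma^n$, $w@w'=(w(1)@w'(1))\cdots(w(n)@w'(n))$ if every letterwise match is defined ($\epsilon@\epsilon=\epsilon$); otherwise (including unequal lengths) undefined. For languages, $B'@B''=\{w'@w''\mid w'\in B',w''\in B'', w'@w''\text{ defined}\}$. Define $B^{0@}=B$, $B^{i@}=B^{(i-1)@}@B$ for $i>0$, and $B^@=\bigcup_{i\ge0}B^{i@}$. The consensual language with base $B$ is $\mathcal{C}(B)=B^@\cap\Sigma^*$. A language $B$ is unproductive if $\mathcal{C}(B)=\emptyset$; a pair $(B,B')$ is unmatchable if $B@B'=\emptyset$. A base $B\subseteq\widetilde\Sigma^*\setminus\mathring\Sigma^+$ is in decomposed form with scaffold $sc$ and fill $fl$ if $B$ is the disjoint union of $sc$ and $fl$, $fl$ is unproductive, and the pair $(sc,sc)$ is unmatchable. *)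

(* Defs.v *)
From mathcomp Require Import all_boot.
Set Implicit Arguments. Unset Strict Implicit. Unset Printing Implicit Defensive.

(* Extended alphabet: inl a = undotted letter a, inr a = dotted letter (ring a). *)
Definition ext (S : finType) := (S + S)%type.
Definition word (S : finType) := seq (ext S).
Definition lang (S : finType) := word S -> Prop.

Definition lmatch (S : finType) (x y : ext S) : option (ext S) :=
  match x, y with
  | inl a, inr b => if a == b then Some (inl a) else None
  | inr a, inl b => if a == b then Some (inl b) else None
  | inr a, inr b => if a == b then Some (inr a) else None
  | inl _, inl _ => None
  end.

Fixpoint wmatch (S : finType) (w w' : word S) : option (word S) :=
  match w, w' with
  | [::], [::] => Some [::]
  | x :: u, y :: v =>
      match lmatch x y, wmatch u v with
      | Some z, Some r => Some (z :: r)
      | _, _ => None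
      end
  | _, _ => None
  end.

Definition lang_match (S : finType) (B1 B2 : lang S) : lang S :=
  fun w => exists w1 w2, B1 w1 /\ B2 w2 /\ wmatch w1 w2 = Some w.

Fixpoint mpow (S : finType) (B : lang S) (i : nat) : lang S :=
  match i with
  | 0 => B
  | i'.+1 => lang_match (mpow B i') B
  end.

Definition mstar (S : finType) (B : lang S) : lang S := fun w => exists i, mpow B i w.

Definition is_plain (S : finType) (w : word S) : Prop := all (fun x => if x is inl _ then true else false) w.
Definition all_dotted_nonempty (S : finType) (w : word S) : Prop :=
  w <> [::] /\ all (fun x => if x is inr _ then true else false) w.

Definition consensual (S : finType) (B : lang S) : lang S := fun w => mstar B w /\ is_plain w.

Definition unproductive (S : finType) (B : lang S) : Prop := forall w, ~ consensual B w.
Definition unmatchable (S : finType) (B1 B2 : lang S) : Prop := forall w, ~ lang_match B1 B2 w.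

Definition decomposed (S : finType) (B sc fl : lang S) : Prop :=
  (forall w, B w -> ~ all_dotted_nonempty w) /\
  (forall w, B w <-> sc w \/ fl w) /\
  (forall w, ~ (sc w /\ fl w)) /\
  unproductive fl /\ unmatchable sc sc.

(* Main.v *)
Require Import Defs.
From mathcomp Require Import all_boot.

Set Implicit Arguments. Unset Strict Implicit.
Section L.
Variable S : finType.

Ltac crush :=
  simpl in *;
  repeat (match goal with
  | [ H : context[?a == ?b] |- _ ] => destruct (@eqP _ a b); subst
  | [ |- context[?a == ?b] ] => destruct (@eqP _ a b); subst
  | [ H : Some _ = Some _ |- _ ] => injection H; clear H; intros; subst
  | [ H : None = Some _ |- _ ] => discriminate H
  | [ H : ?a <> ?a |- _ ] => exfalso; exact (H erefl)
  end; simpl in * ); eauto.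

Lemma lcomm (x y : ext S) : lmatch x y = lmatch y x.
Proof. destruct x, y; crush. Qed.

Lemma lassoc1 (x y z u w : ext S) : lmatch x y = Some u -> lmatch u z = Some w ->
  exists v, lmatch y z = Some v /\ lmatch x v = Some w.
Proof. intros H1 H2. destruct x, y, z; crush; try (eexists; split; [reflexivity|]; crush). Qed.

Lemma lassoc2 (x y z v w : ext S) : lmatch y z = Some v -> lmatch x v = Some w ->
  exists u, lmatch x y = Some u /\ lmatch u z = Some w.
Proof. intros H1 H2. destruct x, y, z; crush; try (eexists; split; [reflexivity|]; crush). Qed.

Lemma lsub (x y z u w : ext S) : lmatch x y = Some u -> lmatch u z = Some w ->
  exists t, lmatch x z = Some t.
Proof. intros H1 H2. destruct x, y, z; crush; try (eexists; split; [reflexivity|]; crush). Qed.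

Ltac bad :=
  repeat match goal with
  | [ H : context [match ?e with _ => _ end] |- _ ] => destruct e
  | [ H : Some _ = Some _ |- _ ] => injection H; clear H; intros; subst
  end; try discriminate; try (by exists [::]); try (by exists [::]; split).

Lemma wcomm (x y : word S) : wmatch x y = wmatch y x.
Proof.
elim: x y => [|a x IH] [|b y] //=. by rewrite lcomm IH.
Qed.

Lemma wassoc1 (x y z u w : word S) : wmatch x y = Some u -> wmatch u z = Some w ->
  exists v, wmatch y z = Some v /\ wmatch x v = Some w.
Proof.
elim: x y z u w => [|a x IH] [|b y] [|c z] u w /=; move=> H1 H2; try (by bad).
  move: H1 H2.
  case E1: (lmatch a b) => [d|] //; case E2: (wmatch x y) => [r|] // [<-] /=.
  case E3: (lmatch d c) => [e|] //; case E4: (wmatch r z) => [t|] // [<-].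
  have [v [Hv1 Hv2]] := lassoc1 E1 E3.
  have [v' [Hv1' Hv2']] := IH _ _ _ _ E2 E4.
  exists (v :: v'); by rewrite Hv1 Hv1' /= Hv2 Hv2'.
Qed.

Lemma wassoc2 (x y z v w : word S) : wmatch y z = Some v -> wmatch x v = Some w ->
  exists u, wmatch x y = Some u /\ wmatch u z = Some w.
Proof.
elim: x y z v w => [|a x IH] [|b y] [|c z] v w /=; move=> H1 H2; try (by bad).
  move: H1 H2.
  case E1: (lmatch b c) => [d|] //; case E2: (wmatch y z) => [r|] // [<-] /=.
  case E3: (lmatch a d) => [e|] //; case E4: (wmatch x r) => [t|] // [<-].
  have [u [Hu1 Hu2]] := lassoc2 E1 E3.
  have [u' [Hu1' Hu2']] := IH _ _ _ _ E2 E4.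
  exists (u :: u'); by rewrite Hu1 Hu1' /= Hu2 Hu2'.
Qed.

Lemma wsub (x y z u w : word S) : wmatch x y = Some u -> wmatch u z = Some w ->
  exists t, wmatch x z = Some t.
Proof.
elim: x y z u w => [|a x IH] [|b y] [|c z] u w /=; move=> H1 H2; try (by bad).
  move: H1 H2.
  case E1: (lmatch a b) => [d|] //; case E2: (wmatch x y) => [r|] // [<-] /=.
  case E3: (lmatch d c) => [e|] //; case E4: (wmatch r z) => [t|] // _.
  have [v Hv] := lsub E1 E3.
  have [v' Hv'] := IH _ _ _ _ E2 E4.
  exists (v :: v'); by rewrite Hv Hv'.
Qed.

End L.

Theorem lemma1 (S : finType) (B sc fl : lang S) :
  decomposed B sc fl ->
  forall w : word S,
    consensual B w <-> ((sc w \/ lang_match sc (mstar fl) w) /\ is_plain w).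
Proof.
move=> [_ [HB [_ [Hunp Hun]]]] w; split.
- move=> [[i Hi] Hp]; split=> //.
  have key : forall i w, mpow B i w ->
     mstar fl w \/ sc w \/ lang_match sc (mstar fl) w.
    elim=> [|k IH] w0 /=.
      by move/HB=> [H|H]; [right; left | left; exists 0].
    move=> [u [b [Hu [Hb Hm]]]].
    case: (IH _ Hu) => [[j Hj]|[Hs|[s [f [Hs [[j Hf] Hm']]]]]];
      case: ((proj1 (HB b)) Hb) => Hb'.
    + right; right; exists b, u; split=> //; split; first by exists j.
      by rewrite wcomm.
    + by left; exists j.+1; exists u, b.
    + by case: (Hun w0); exists u, b.
    + right; right; exists u, b; split=> //; split=> //; by exists 0.
    + have [t Ht] := wsub Hm' Hm.
      by case: (Hun t); exists s, b.
    + have [v [Hv1 Hv2]] := wassoc1 Hm' Hm.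
      right; right; exists s, v; split=> //; split=> //.
      by exists j.+1; exists f, b.
  case: (key _ _ Hi) => [Hf|H] //.
  by case: (Hunp w).
- move=> [H Hp]; split=> //.
  case: H => [Hs|[s [f [Hs [[k Hf] Hm]]]]].
    by exists 0; apply/HB; left.
  exists k.+1.
  elim: k f w Hf Hm {Hp} => [|k IH] f w0 /= Hf Hm.
    exists s, f; split; first by apply/HB; left.
    by split=> //; apply/HB; right.
  case: Hf => [f' [g [Hf' [Hg Hm']]]].
  have [u [Hu1 Hu2]] := wassoc2 Hm' Hm.
  exists u, g; split; first exact: IH Hf' Hu1.
  by split=> //; apply/HB; right.
Qed.
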